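(* Let $\Phi:\mathbb R^+\to\mathbb R$ be non-decreasing and concave with $\Phi(x)/x\to0$ as $x\to\infty$ and $\int_{\mathbb R}e^{-\Phi(|x|)}dx<\infty$. Assume that in a neighbourhood of $+\infty$, $\Phi$ is $\mathcal C^2$ and there exists $\theta>1$ such that $\Phi^\theta$ is convex. Let $d\mu_\Phi(x)=Z_\Phi^{-1}e^{-\Phi(|x|)}dx$ on $\mathbb R$. Then, with $\Phi'$ the right derivative, $$\lim_{t\to0}\frac{J_{\mu_\Phi}(t)}{t\,\Phi'\circ\Phi^{-1}(\log\frac1t)}=1.$$ Consequently, if $\Phi(0)<\log2$, then $L_\Phi(t)=\min(t,1-t)\,\Phi'\circ\Phi^{-1}\big(\log\frac{1}{\min(t,1-t)}\big)$ is defined on $[0,1]$ and there exist $k_1,k_2>0$ such that $k_1L_\Phi(t)\le J_{\mu_\Phi}(t)\le k_2L_\Phi(t)$ for all $t\in[0,1]$.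
   Context: $F_\mu(x)=\mu((-\infty,x])$ and $J_\mu=F_\mu'\circ F_\mu^{-1}$ on $(0,1)$ (extended by $0$ at $0$ and $1$); $Z_\Phi$ is the normalizing constant. *)

(* Defs.v *)
From Stdlib Require Import Reals.
Open Scope R_scope.

(* density (unnormalised) of mu_Phi : x |-> exp(-Phi(|x|)) *)
Definition dens (Phi : R -> R) (x : R) : R := exp (- Phi (Rabs x)).

(* improper Riemann integral  int_{-oo}^x f = l *)
Definition int_lower (f : R -> R) (x l : R) : Prop :=
  forall eps, 0 < eps -> exists M, M <= x /\
    forall a (pr : Riemann_integrable f a x), a <= M -> Rabs (RiemannInt pr - l) < eps.

(* improper Riemann integral  int_R f = l *)
Definition int_full (f : R -> R) (l : R) : Prop :=
  forall eps, 0 < eps -> exists M,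
    forall a b (pr : Riemann_integrable f a b), a <= - M -> M <= b ->
      Rabs (RiemannInt pr - l) < eps.

Definition rderiv (g : R -> R) (x l : R) : Prop :=
  forall eps, 0 < eps -> exists d, 0 < d /\
    forall h, 0 < h < d -> Rabs ((g (x + h) - g x) / h - l) < eps.

(* (Phi' o Phi^{-1})(y) = l, with Phi' the right derivative and Phi^{-1}
   the inverse of Phi on R+ = [0,+oo) *)
Definition dPhi_inv (Phi : R -> R) (y l : R) : Prop :=
  exists x, 0 <= x /\ Phi x = y /\ rderiv Phi x l.

(* L_Phi(t) = L, with L_Phi(0) = L_Phi(1) = 0 (the natural value / limit) *)
Definition LPhi (Phi : R -> R) (t L : R) : Prop :=
  ((t = 0 \/ t = 1) /\ L = 0) \/
  (0 < t < 1 /\ exists l, dPhi_inv Phi (ln (/ Rmin t (1 - t))) l /\ L = Rmin t (1 - t) * l).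

(* Main.v *)
Require Import Defs.
From Stdlib Require Import Reals Lra Psatz Classical.
Open Scope R_scope.


Lemma eq_eps (a b : R) : (forall eps, 0 < eps -> Rabs (a - b) < eps) -> a = b.
Proof.
  intros H. destruct (Req_dec a b) as [e|n]; auto.
  assert (0 < Rabs (a - b)) by (apply Rabs_pos_lt; lra).
  specialize (H _ H0). lra.
Qed.

Lemma div_le_div (a b c d : R) : 0 < b -> 0 < d -> a * d <= c * b -> a / b <= c / d.
Proof.
  intros Hb Hd H.
  assert (E1 : a / b = a * d / (b * d)) by (field; lra).
  assert (E2 : c / d = c * b / (b * d)) by (field; lra).
  rewrite E1, E2. unfold Rdiv. apply Rmult_le_compat_r; [|lra].
  left; apply Rinv_0_lt_compat; nra.
Qed.

Definition slope (g : R -> R) (x y : R) := (g y - g x) / (y - x).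

Definition conc_on (g : R -> R) (P : R -> Prop) := forall x y lam, P x -> P y -> 0 <= lam <= 1 ->
      lam * g x + (1 - lam) * g y <= g (lam * x + (1 - lam) * y).

Lemma conc3 g P : conc_on g P -> forall x y z, P x -> P z -> x < y < z ->
  (z - y) * g x + (y - x) * g z <= (z - x) * g y.
Proof.
  intros Hc x y z Px Pz Hxyz.
  set (lam := (z - y) / (z - x)).
  assert (Hl : 0 <= lam <= 1).
  { unfold lam; split.
    - apply Rmult_le_pos; [lra|left; apply Rinv_0_lt_compat; lra].
    - apply Rmult_le_reg_r with (z - x); [lra|].
      unfold Rdiv; rewrite Rmult_assoc, Rinv_l; lra. }
  specialize (Hc x z lam Px Pz Hl).
  assert (Ey : lam * x + (1 - lam) * z = y) by (unfold lam; field; lra).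
  rewrite Ey in Hc.
  assert (E2 : (z - x) * (lam * g x + (1 - lam) * g z) = (z - y) * g x + (y - x) * g z)
    by (unfold lam; field; lra).
  rewrite <- E2. apply Rmult_le_compat_l; lra.
Qed.

Lemma slope_l g P : conc_on g P -> forall x y z, P x -> P z -> x < y < z ->
  slope g x z <= slope g x y.
Proof.
  intros Hc x y z Px Pz H. pose proof (conc3 g P Hc x y z Px Pz H).
  unfold slope; apply div_le_div; nra.
Qed.

Lemma slope_r g P : conc_on g P -> forall x y z, P x -> P z -> x < y < z ->
  slope g y z <= slope g x z.
Proof.
  intros Hc x y z Px Pz H. pose proof (conc3 g P Hc x y z Px Pz H).
  unfold slope; apply div_le_div; nra.
Qed.

Lemma slope_mono g P : conc_on g P ->
  (forall u v w, P u -> P w -> u <= v <= w -> P v) ->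
  forall a b c d, P a -> P d -> a < b -> a <= c -> c < d -> b <= d ->
  slope g c d <= slope g a b.
Proof.
  intros Hc Hint a b c d Pa Pd H1 H2 H3 H4.
  assert (S1 : slope g a d <= slope g a b).
  { destruct (Req_dec b d) as [e|n]; [subst; lra|].
    apply (slope_l g P Hc); auto; lra. }
  assert (S2 : slope g c d <= slope g a d).
  { destruct (Req_dec a c) as [e|n]; [subst; lra|].
    apply (slope_r g P Hc); auto; lra. }
  lra.
Qed.

Lemma rderiv_ge g x l c : rderiv g x l ->
  (exists h0, 0 < h0 /\ forall h, 0 < h < h0 -> c <= (g (x + h) - g x) / h) -> c <= l.
Proof.
  intros Hd [h0 [Hh0 Hq]]. destruct (Rle_lt_dec c l) as [|Hlt]; auto.
  destruct (Hd (c - l)) as [d [Hd0 Hd1]]; [lra|].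
  set (h := Rmin d h0 / 2).
  assert (0 < h < d /\ h < h0) by (unfold h; pose proof (Rmin_l d h0); pose proof (Rmin_r d h0);
     assert (0 < Rmin d h0) by (apply Rmin_pos; lra); lra).
  specialize (Hd1 h ltac:(lra)). specialize (Hq h ltac:(lra)).
  apply Rabs_def2 in Hd1. lra.
Qed.

Lemma rderiv_le g x l c : rderiv g x l ->
  (exists h0, 0 < h0 /\ forall h, 0 < h < h0 -> (g (x + h) - g x) / h <= c) -> l <= c.
Proof.
  intros Hd [h0 [Hh0 Hq]]. destruct (Rle_lt_dec l c) as [|Hlt]; auto.
  destruct (Hd (l - c)) as [d [Hd0 Hd1]]; [lra|].
  set (h := Rmin d h0 / 2).
  assert (0 < h < d /\ h < h0) by (unfold h; pose proof (Rmin_l d h0); pose proof (Rmin_r d h0);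
     assert (0 < Rmin d h0) by (apply Rmin_pos; lra); lra).
  specialize (Hd1 h ltac:(lra)). specialize (Hq h ltac:(lra)).
  apply Rabs_def2 in Hd1. lra.
Qed.

Lemma deriv_rderiv g x l : derivable_pt_lim g x l -> rderiv g x l.
Proof.
  intros H eps Heps. destruct (H eps Heps) as [d Hd].
  exists d; split; [apply cond_pos|]. intros h Hh.
  apply Hd; [lra|]. rewrite Rabs_right; lra.
Qed.

Lemma rderiv_unique g x l1 l2 : rderiv g x l1 -> rderiv g x l2 -> l1 = l2.
Proof.
  intros H1 H2. apply eq_eps. intros eps Heps.
  destruct (H1 (eps/2)) as [d1 [Hd1 Q1]]; [lra|].
  destruct (H2 (eps/2)) as [d2 [Hd2 Q2]]; [lra|].
  set (h := Rmin d1 d2 / 2).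
  assert (0 < h < d1 /\ h < d2) by (unfold h; pose proof (Rmin_l d1 d2); pose proof (Rmin_r d1 d2);
     assert (0 < Rmin d1 d2) by (apply Rmin_pos; lra); lra).
  specialize (Q1 h ltac:(lra)). specialize (Q2 h ltac:(lra)).
  apply Rabs_def2 in Q1. apply Rabs_def2 in Q2. apply Rabs_def1; lra.
Qed.

Lemma dpl_local f g x l r : 0 < r -> (forall u, Rabs (u - x) < r -> f u = g u) ->
  derivable_pt_lim g x l -> derivable_pt_lim f x l.
Proof.
  intros Hr He H eps Heps. destruct (H eps Heps) as [d Hd].
  assert (Hp : 0 < Rmin d r) by (apply Rmin_pos; [apply cond_pos|lra]).
  exists (mkposreal _ Hp). intros h Hh0 Hh. simpl in Hh.
  rewrite (He (x + h)), (He x).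
  - apply Hd; auto. pose proof (Rmin_l d r); lra.
  - replace (x - x) with 0 by ring; rewrite Rabs_R0; lra.
  - replace (x + h - x) with h by ring. pose proof (Rmin_r d r); lra.
Qed.

Lemma noninc g g' a b : a <= b -> (forall c, a <= c <= b -> derivable_pt_lim g c (g' c)) ->
  (forall c, a <= c <= b -> g' c <= 0) -> g b <= g a.
Proof.
  intros Hab Hd Hn. destruct (Req_dec a b) as [e|n]; [subst; lra|].
  destruct (MVT_cor2 g g' a b ltac:(lra) Hd) as [c [Hc1 Hc2]].
  assert (g' c <= 0) by (apply Hn; lra). nra.
Qed.

Lemma strinc g g' a b : a < b -> (forall c, a <= c <= b -> derivable_pt_lim g c (g' c)) ->
  (forall c, a <= c <= b -> 0 < g' c) -> g a < g b.
Proof.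
  intros Hab Hd Hn.
  destruct (MVT_cor2 g g' a b Hab Hd) as [c [Hc1 Hc2]].
  assert (0 < g' c) by (apply Hn; lra). nra.
Qed.

Lemma ln_le' x y : 0 < x -> x <= y -> ln x <= ln y.
Proof. intros H1 H2. destruct H2 as [H2|H2]; [left; apply ln_increasing; auto|subst; lra]. Qed.

Lemma ln_le_sub1 x : 0 < x -> ln x <= x - 1.
Proof. intros H. pose proof (exp_ineq1_le (ln x)). rewrite exp_ln in H0; lra. Qed.

Lemma ln_small eta : 0 < eta -> exists B, 0 < B /\ forall u, B <= u -> ln u <= eta * u.
Proof.
  intros He. exists (4 / (eta * eta) + 1). split.
  { assert (0 < 4 / (eta*eta)) by (apply Rdiv_lt_0_compat; nra). lra. }
  intros u Hu.
  assert (P4 : 0 < 4 / (eta*eta)) by (apply Rdiv_lt_0_compat; nra).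
  assert (Hu0 : 0 < u) by lra.
  set (s := sqrt u).
  assert (Hs : s * s = u) by (unfold s; apply sqrt_sqrt; lra).
  assert (Hs0 : 0 < s) by (unfold s; apply sqrt_lt_R0; lra).
  assert (Hl : ln u = 2 * ln s).
  { rewrite <- Hs. rewrite ln_mult; auto; ring. }
  pose proof (ln_le_sub1 s Hs0).
  assert (E4 : eta * eta * (4 / (eta * eta)) = 4) by (field; lra).
  assert (eta * s >= 2).
  { destruct (Rge_or_lt (eta * s) 2) as [|Hlt]; auto.
    assert (0 < eta * s) by (apply Rmult_lt_0_compat; lra).
    assert ((eta*s)*(eta*s) < 2 * 2) by (apply Rmult_le_0_lt_compat; lra).
    assert (eta*eta*(s*s) >= eta*eta*(4/(eta*eta))) by (apply Rmult_ge_compat_l; nra).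
    assert (eta*eta*(s*s) = (eta*s)*(eta*s)) by ring. lra. }
  rewrite Hl, <- Hs. nra.
Qed.

Lemma cont_eps f x : (forall eps, 0 < eps -> exists d, 0 < d /\
   forall y, Rabs (y - x) < d -> Rabs (f y - f x) < eps) -> continuity_pt f x.
Proof.
  intros H eps Heps. destruct (H eps Heps) as [d [Hd Hy]].
  exists d; split; auto. intros y [_ Hy2]. simpl in *. unfold Rdist in *. auto.
Qed.


Lemma Phi_slope_mono Phi : conc_on Phi (fun x => 0 <= x) ->
  forall a b c d, 0 <= a -> a < b -> a <= c -> c < d -> b <= d ->
  slope Phi c d <= slope Phi a b.
Proof.
  intros Hc a b c d H0 H1 H2 H3 H4.
  apply (slope_mono Phi (fun x => 0 <= x) Hc); auto; try lra.
  intros; lra.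
Qed.

Lemma slope_nonneg Phi : (forall x y, 0 <= x -> x <= y -> Phi x <= Phi y) ->
  forall a b, 0 <= a -> a < b -> 0 <= slope Phi a b.
Proof.
  intros Hm a b H0 H1. unfold slope. apply Rmult_le_pos.
  - pose proof (Hm a b H0 ltac:(lra)); lra.
  - left; apply Rinv_0_lt_compat; lra.
Qed.

Lemma Phi_lip Phi : (forall x y, 0 <= x -> x <= y -> Phi x <= Phi y) ->
  conc_on Phi (fun x => 0 <= x) ->
  forall x v, 0 < x -> x / 2 <= v -> Rabs (Phi v - Phi x) <= slope Phi (x/2) x * Rabs (v - x).
Proof.
  intros Hm Hc x v Hx Hv.
  destruct (Rtotal_order v x) as [Hlt|[He|Hgt]].
  - assert (S : slope Phi v x <= slope Phi (x/2) x).
    { apply Phi_slope_mono; auto; lra. }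
    pose proof (Hm v x ltac:(lra) ltac:(lra)).
    assert (E : Phi x - Phi v = slope Phi v x * (x - v)) by (unfold slope; field; lra).
    rewrite Rabs_left1 by lra. rewrite Rabs_left1 by lra.
    revert E S. generalize (slope Phi v x) (slope Phi (x/2) x). intros. nra.
  - rewrite He. unfold Rminus. rewrite !Rplus_opp_r, Rabs_R0. lra.
  - assert (S : slope Phi x v <= slope Phi (x/2) x).
    { apply Phi_slope_mono; auto; lra. }
    pose proof (Hm x v ltac:(lra) ltac:(lra)).
    assert (E : Phi v - Phi x = slope Phi x v * (v - x)) by (unfold slope; field; lra).
    rewrite Rabs_right by lra. rewrite Rabs_right by lra.
    revert E S. generalize (slope Phi x v) (slope Phi (x/2) x). intros. nra.
Qed.

Lemma Phi_cont_pos Phi : (forall x y, 0 <= x -> x <= y -> Phi x <= Phi y) ->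
  conc_on Phi (fun x => 0 <= x) ->
  forall x eps, 0 < x -> 0 < eps -> exists d, 0 < d /\
     forall v, Rabs (v - x) < d -> Rabs (Phi v - Phi x) < eps.
Proof.
  intros Hm Hc x eps Hx Heps.
  set (C := slope Phi (x/2) x).
  assert (HC : 0 <= C) by (apply slope_nonneg; auto; lra).
  exists (Rmin (x/2) (eps / (C + 1))). split.
  { apply Rmin_pos; [lra|apply Rdiv_lt_0_compat; lra]. }
  intros v Hv.
  pose proof (Rmin_l (x/2) (eps/(C+1))). pose proof (Rmin_r (x/2) (eps/(C+1))).
  assert (Hv2 : x / 2 <= v) by (apply Rabs_def2 in Hv; lra).
  pose proof (Phi_lip Phi Hm Hc x v Hx Hv2).
  assert (C * Rabs (v - x) <= C * (eps / (C+1))) by (apply Rmult_le_compat_l; lra).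
  assert (C * (eps / (C+1)) < eps).
  { apply Rmult_lt_reg_r with (C+1); [lra|].
    replace (C * (eps / (C + 1)) * (C + 1)) with (C * eps) by (field; lra). nra. }
  fold C in H1. lra.
Qed.

Definition Mono (Phi : R -> R) := forall x y, 0 <= x -> x <= y -> Phi x <= Phi y.
Definition Cont0 (Phi : R -> R) := forall eps, 0 < eps -> exists d, 0 < d /\
      forall x, 0 <= x < d -> Rabs (Phi x - Phi 0) < eps.

Lemma Phi_abs_cont Phi : Mono Phi -> conc_on Phi (fun x => 0 <= x) -> Cont0 Phi ->
  forall u, continuity_pt (fun v => Phi (Rabs v)) u.
Proof.
  intros Hm Hc H0 u. apply cont_eps. intros eps Heps.
  destruct (Req_dec u 0) as [Hu|Hu].
  - subst. destruct (H0 eps Heps) as [d [Hd Hx]]. exists d; split; auto.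
    intros y Hy. rewrite Rabs_R0. rewrite Rminus_0_r in Hy. apply Hx.
    split; [apply Rabs_pos|auto].
  - assert (Hpos : 0 < Rabs u) by (apply Rabs_pos_lt; auto).
    destruct (Phi_cont_pos Phi Hm Hc (Rabs u) eps Hpos Heps) as [d [Hd Hv]].
    exists d; split; auto. intros y Hy. apply Hv.
    pose proof (Rabs_triang_inv2 y u). lra.
Qed.

Lemma Rmax_lip u v c : Rabs (Rmax v c - Rmax u c) <= Rabs (v - u).
Proof.
  unfold Rmax. destruct (Rle_dec v c); destruct (Rle_dec u c).
  - replace (c - c) with 0 by ring. rewrite Rabs_R0. apply Rabs_pos.
  - rewrite !Rabs_left1 by lra. lra.
  - rewrite !Rabs_right by lra. lra.
  - lra.
Qed.

Lemma Phi_max_cont Phi : Mono Phi -> conc_on Phi (fun x => 0 <= x) ->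
  forall c, 0 < c -> continuity (fun u => Phi (Rmax u c)).
Proof.
  intros Hm Hc c Hcp u. apply cont_eps. intros eps Heps.
  assert (Hpos : 0 < Rmax u c) by (pose proof (Rmax_r u c); lra).
  destruct (Phi_cont_pos Phi Hm Hc (Rmax u c) eps Hpos Heps) as [d [Hd Hv]].
  exists d; split; auto. intros y Hy. apply Hv.
  pose proof (Rmax_lip u y c). lra.
Qed.

Lemma dens_cont Phi : Mono Phi -> conc_on Phi (fun x => 0 <= x) -> Cont0 Phi ->
  forall u, continuity_pt (dens Phi) u.
Proof.
  intros Hm Hc H0 u.
  assert (H1 : continuity_pt (fun v => - Phi (Rabs v)) u).
  { apply (continuity_pt_opp (fun v => Phi (Rabs v))). apply Phi_abs_cont; auto. }
  change (dens Phi) with (comp exp (fun v => - Phi (Rabs v))).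
  apply continuity_pt_comp; auto. apply derivable_continuous_pt, derivable_pt_exp.
Qed.

Lemma dens_int Phi : Mono Phi -> conc_on Phi (fun x => 0 <= x) -> Cont0 Phi ->
  forall a b, Riemann_integrable (dens Phi) a b.
Proof.
  intros Hm Hc H0 a b. destruct (Rle_dec a b).
  - apply continuity_implies_RiemannInt; auto. intros; apply dens_cont; auto.
  - apply RiemannInt_P1. apply continuity_implies_RiemannInt; [lra|].
    intros; apply dens_cont; auto.
Qed.

Lemma int_ge_const f a b c (pr : Riemann_integrable f a b) : a <= b ->
  (forall x, a < x < b -> c <= f x) -> c * (b - a) <= RiemannInt pr.
Proof.
  intros Hab H. rewrite <- (RiemannInt_P15 (RiemannInt_P14 a b c)).
  apply RiemannInt_P19; auto.
Qed.

Lemma Phi_rderiv_ex Phi : Mono Phi -> conc_on Phi (fun x => 0 <= x) ->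
  forall x, 0 < x -> exists l, rderiv Phi x l.
Proof.
  intros Hm Hc x Hx.
  set (E := fun s => exists h, 0 < h /\ s = slope Phi x (x + h)).
  assert (Hb : bound E).
  { exists (slope Phi (x/2) x). intros s [h [Hh ->]].
    apply Phi_slope_mono; auto; lra. }
  assert (Hne : exists s, E s) by (exists (slope Phi x (x+1)); exists 1; split; [lra|auto]).
  destruct (completeness E Hb Hne) as [m [Hub Hlub]].
  exists m. intros eps Heps.
  assert (Hex : exists s, E s /\ m - eps < s).
  { apply NNPP. intros Hn.
    assert (is_upper_bound E (m - eps)).
    { intros s Hs. destruct (Rle_lt_dec s (m - eps)); auto.
      exfalso; apply Hn; exists s; auto. }
    specialize (Hlub _ H). lra. }
  destruct Hex as [s [[h0 [Hh0 ->]] Hs]].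
  exists h0; split; auto. intros h Hh.
  assert (Eq : (Phi (x + h) - Phi x) / h = slope Phi x (x + h))
    by (unfold slope; replace (x + h - x) with h by ring; auto).
  rewrite Eq.
  assert (S1 : slope Phi x (x + h0) <= slope Phi x (x + h)) by (apply Phi_slope_mono; auto; lra).
  assert (S2 : slope Phi x (x + h) <= m) by (apply Hub; exists h; split; auto; lra).
  apply Rabs_def1; lra.
Qed.

Definition IntFull (Phi : R -> R) (Z : R) := int_full (dens Phi) Z.

Lemma Phi_unbounded Phi Z : Mono Phi -> conc_on Phi (fun x => 0 <= x) -> Cont0 Phi ->
  int_full (dens Phi) Z -> forall B, exists x, 0 <= x /\ B < Phi x.
Proof.
  intros Hm Hc H0 HZ B. apply NNPP. intros Hn.
  assert (Hle : forall x, 0 <= x -> Phi x <= B).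
  { intros x Hx. destruct (Rle_lt_dec (Phi x) B); auto. exfalso; apply Hn; exists x; auto. }
  destruct (HZ 1 ltac:(lra)) as [M HM].
  set (e := exp (- B)). assert (He : 0 < e) by apply exp_pos.
  set (b := Rabs M + (Rabs Z + 1) / e).
  assert (Hq : 0 <= (Rabs Z + 1) / e) by (apply Rmult_le_pos; [pose proof (Rabs_pos Z); lra|left; apply Rinv_0_lt_compat; auto]).
  assert (Hb1 : M <= b) by (unfold b; pose proof (Rle_abs M); lra).
  assert (Hb2 : - b <= - M) by lra.
  pose proof (HM (-b) b (dens_int Phi Hm Hc H0 (-b) b) Hb2 Hb1) as HI.
  assert (Hlow : e * (b - - b) <= RiemannInt (dens_int Phi Hm Hc H0 (- b) b)).
  { apply int_ge_const; [unfold b; pose proof (Rabs_pos M); lra|].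
    intros u _. unfold dens, e. destruct (Req_dec (Phi (Rabs u)) B) as [E|E]; [rewrite E; lra|].
    left; apply exp_increasing. pose proof (Hle (Rabs u) (Rabs_pos u)). lra. }
  assert (e * ((Rabs Z + 1) / e) = Rabs Z + 1) by (field; lra).
  assert (e * b >= Rabs Z + 1) by (unfold b; pose proof (Rabs_pos M); nra).
  assert (e * (b - - b) = 2 * (e * b)) by ring. apply Rabs_def2 in HI. pose proof (Rle_abs Z). destruct HI. pose proof (Rabs_pos Z). lra.
Qed.

Lemma Phi_strict Phi Z : Mono Phi -> conc_on Phi (fun x => 0 <= x) -> Cont0 Phi ->
  int_full (dens Phi) Z -> forall x y, 0 <= x -> x < y -> Phi x < Phi y.
Proof.
  intros Hm Hc H0 HZ x y Hx Hxy.
  destruct (Hm x y Hx ltac:(lra)) as [|He]; auto. exfalso.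
  destruct (Phi_unbounded Phi Z Hm Hc H0 HZ (Phi y)) as [z [Hz Hzy]].
  destruct (Rle_lt_dec z y) as [Hzl|Hzl].
  - pose proof (Hm z y Hz Hzl). lra.
  - assert (S : slope Phi y z <= slope Phi x y) by (apply Phi_slope_mono; auto; lra).
    unfold slope at 2 in S. rewrite He in S. replace (Phi y - Phi y) with 0 in S by ring.
    unfold Rdiv in S. rewrite Rmult_0_l in S.
    assert (0 < slope Phi y z).
    { unfold slope. apply Rdiv_lt_0_compat; lra. }
    lra.
Qed.

Lemma Phi_preimage Phi Z : Mono Phi -> conc_on Phi (fun x => 0 <= x) -> Cont0 Phi ->
  int_full (dens Phi) Z -> forall c v, 0 < c -> Phi c <= v ->
  exists y l, c <= y /\ Phi y = v /\ rderiv Phi y l.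
Proof.
  intros Hm Hc H0 HZ c v Hc0 Hv.
  assert (Hy : exists y, c <= y /\ Phi y = v).
  { destruct Hv as [Hv|Hv]; [|exists c; split; auto; lra].
    destruct (Phi_unbounded Phi Z Hm Hc H0 HZ v) as [Y [HY0 HYv]].
    assert (HcY : c < Y).
    { destruct (Rle_lt_dec Y c); auto. pose proof (Hm Y c HY0 r). lra. }
    set (f := fun u => Phi (Rmax u c) - v).
    assert (Hf : continuity f).
    { intro u. unfold f. apply (continuity_pt_minus (fun u => Phi (Rmax u c)) (fun _ => v)).
      - apply Phi_max_cont; auto.
      - apply continuity_pt_const. intros ? ?; auto. }
    assert (Ec : Rmax c c = c) by (unfold Rmax; destruct (Rle_dec c c); auto).
    assert (EY : Rmax Y c = Y) by (unfold Rmax; destruct (Rle_dec Y c); lra).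
    destruct (IVT f c Y Hf HcY) as [z [Hz Hfz]].
    - unfold f; rewrite Ec; lra.
    - unfold f; rewrite EY; lra.
    - exists z. unfold f in Hfz.
      assert (Ez : Rmax z c = z) by (unfold Rmax; destruct (Rle_dec z c); lra).
      rewrite Ez in Hfz. split; lra. }
  destruct Hy as [y [Hcy Hyv]].
  destruct (Phi_rderiv_ex Phi Hm Hc y ltac:(lra)) as [l Hl].
  exists y, l; auto.
Qed.

Lemma exp_le' a b : a <= b -> exp a <= exp b.
Proof. intros [H|H]; [left; apply exp_increasing; auto|subst; lra]. Qed.

Lemma dens_pos Phi x : 0 < dens Phi x.
Proof. unfold dens; apply exp_pos. Qed.


Lemma F_ftc Phi Z F (Hm : Mono Phi) (Hc : conc_on Phi (fun x => 0 <= x)) (H0 : Cont0 Phi)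
  (HF : forall x, int_lower (dens Phi) x (Z * F x)) :
  forall u v, Z * F u - Z * F v = RiemannInt (dens_int Phi Hm Hc H0 v u).
Proof.
  intros u v. apply eq_eps. intros eps Heps.
  destruct (HF u (eps/2) ltac:(lra)) as [Mu [HMu Pu]].
  destruct (HF v (eps/2) ltac:(lra)) as [Mv [HMv Pv]].
  set (a := Rmin Mu Mv).
  pose proof (Rmin_l Mu Mv). pose proof (Rmin_r Mu Mv).
  specialize (Pu a (dens_int Phi Hm Hc H0 a u) ltac:(unfold a; lra)).
  specialize (Pv a (dens_int Phi Hm Hc H0 a v) ltac:(unfold a; lra)).
  pose proof (RiemannInt_P26 (dens_int Phi Hm Hc H0 a v) (dens_int Phi Hm Hc H0 v u)
     (dens_int Phi Hm Hc H0 a u)) as E.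
  apply Rabs_def2 in Pu. apply Rabs_def2 in Pv. apply Rabs_def1; lra.
Qed.

Lemma Z_pos Phi Z (Hm : Mono Phi) (Hc : conc_on Phi (fun x => 0 <= x)) (H0 : Cont0 Phi)
  (HZ : int_full (dens Phi) Z) : 0 < Z.
Proof.
  set (pr := dens_int Phi Hm Hc H0).
  set (I1 := RiemannInt (pr (-1) 1)).
  assert (HI1 : exp (- Phi 1) * (1 - -1) <= I1).
  { apply int_ge_const; [lra|]. intros u Hu. unfold dens. apply exp_le'.
    apply Ropp_le_contravar. apply Hm; [apply Rabs_pos|]. apply Rabs_le; lra. }
  assert (Hp : 0 < exp (- Phi 1)) by apply exp_pos.
  destruct (HZ (I1/2) ltac:(lra)) as [M HM].
  set (b := Rabs M + 1).
  assert (Hb : M <= b /\ 1 <= b) by (unfold b; pose proof (Rle_abs M); pose proof (Rabs_pos M); lra).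
  specialize (HM (-b) b (pr (-b) b) ltac:(lra) ltac:(lra)).
  pose proof (RiemannInt_P26 (pr (-b) (-1)) (pr (-1) 1) (pr (-b) 1)) as E1.
  pose proof (RiemannInt_P26 (pr (-b) 1) (pr 1 b) (pr (-b) b)) as E2.
  assert (P1 : 0 * (-1 - - b) <= RiemannInt (pr (-b) (-1))).
  { apply int_ge_const; [lra|]. intros; left; apply dens_pos. }
  assert (P2 : 0 * (b - 1) <= RiemannInt (pr 1 b)).
  { apply int_ge_const; [lra|]. intros; left; apply dens_pos. }
  apply Rabs_def2 in HM. fold I1 in E1. lra.
Qed.

Lemma F_deriv Phi Z F (Hm : Mono Phi) (Hc : conc_on Phi (fun x => 0 <= x)) (H0 : Cont0 Phi)
  (HZ : int_full (dens Phi) Z) (HF : forall x, int_lower (dens Phi) x (Z * F x)) :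
  forall x, derivable_pt_lim F x (dens Phi x / Z).
Proof.
  intros x. pose proof (Z_pos Phi Z Hm Hc H0 HZ) as Zp.
  assert (h : x - 1 <= x + 1) by lra.
  assert (C0 : forall y, x - 1 <= y <= x + 1 -> continuity_pt (dens Phi) y)
    by (intros; apply dens_cont; auto).
  set (P := primitive h (FTC_P1 h C0)).
  assert (HP : derivable_pt_lim P x (dens Phi x)) by (apply RiemannInt_P27; lra).
  apply dpl_local with (g := plus_fct (fct_cte (F (x - 1))) (mult_real_fct (/ Z) P)) (r := 1); [lra| |].
  - intros u Hu. apply Rabs_def2 in Hu.
    unfold plus_fct, fct_cte, mult_real_fct, P, primitive.
    destruct (Rle_dec (x - 1) u) as [r1|r1]; [|lra].
    destruct (Rle_dec u (x + 1)) as [r2|r2]; [|lra].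
    rewrite (RiemannInt_P5 _ (dens_int Phi Hm Hc H0 (x - 1) u)).
    rewrite <- (F_ftc Phi Z F Hm Hc H0 HF). field. lra.
  - replace (dens Phi x / Z) with (0 + / Z * dens Phi x) by (field; lra).
    apply derivable_pt_lim_plus; [apply derivable_pt_lim_const|].
    apply derivable_pt_lim_scal; auto.
Qed.

Lemma F_left Phi Z F (Hm : Mono Phi) (Hc : conc_on Phi (fun x => 0 <= x)) (H0 : Cont0 Phi)
  (HZ : int_full (dens Phi) Z) (HF : forall x, int_lower (dens Phi) x (Z * F x)) :
  forall eps, 0 < eps -> exists M, forall x, x <= - M -> Rabs (Z * F x) < eps.
Proof.
  intros eps Heps. destruct (HZ (eps/3) ltac:(lra)) as [M HM].
  exists M. intros x Hx.
  destruct (HF x (eps/3) ltac:(lra)) as [Mx [HMx Px]].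
  set (pr := dens_int Phi Hm Hc H0).
  set (b := Rabs M + 1).
  assert (Hb : M <= b) by (unfold b; pose proof (Rle_abs M); lra).
  specialize (Px Mx (pr Mx x) ltac:(lra)).
  pose proof (HM Mx b (pr Mx b) ltac:(lra) Hb) as K1.
  pose proof (HM x b (pr x b) Hx Hb) as K2.
  pose proof (RiemannInt_P26 (pr Mx x) (pr x b) (pr Mx b)) as E.
  apply Rabs_def2 in Px. apply Rabs_def2 in K1. apply Rabs_def2 in K2. apply Rabs_def1; lra.
Qed.

Lemma F_right Phi Z F (Hm : Mono Phi) (Hc : conc_on Phi (fun x => 0 <= x)) (H0 : Cont0 Phi)
  (HZ : int_full (dens Phi) Z) (HF : forall x, int_lower (dens Phi) x (Z * F x)) :
  forall eps, 0 < eps -> exists M, forall x, M <= x -> Rabs (Z - Z * F x) < eps.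
Proof.
  intros eps Heps. destruct (HZ (eps/2) ltac:(lra)) as [M HM].
  exists M. intros x Hx.
  destruct (HF x (eps/2) ltac:(lra)) as [Mx [HMx Px]].
  set (a := Rmin Mx (- M)).
  pose proof (Rmin_l Mx (-M)). pose proof (Rmin_r Mx (-M)).
  specialize (Px a (dens_int Phi Hm Hc H0 a x) ltac:(unfold a; lra)).
  pose proof (HM a x (dens_int Phi Hm Hc H0 a x) ltac:(unfold a; lra) Hx) as K1.
  apply Rabs_def2 in Px. apply Rabs_def2 in K1. apply Rabs_def1; lra.
Qed.

Lemma F_strict Phi Z F (Hm : Mono Phi) (Hc : conc_on Phi (fun x => 0 <= x)) (H0 : Cont0 Phi)
  (HZ : int_full (dens Phi) Z) (HF : forall x, int_lower (dens Phi) x (Z * F x)) :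
  forall x y, x < y -> F x < F y.
Proof.
  intros x y Hxy. pose proof (Z_pos Phi Z Hm Hc H0 HZ) as Zp.
  apply (strinc F (fun u => dens Phi u / Z)); auto.
  - intros; apply F_deriv; auto.
  - intros; apply Rdiv_lt_0_compat; auto; apply dens_pos.
Qed.

Lemma F_bounds Phi Z F (Hm : Mono Phi) (Hc : conc_on Phi (fun x => 0 <= x)) (H0 : Cont0 Phi)
  (HZ : int_full (dens Phi) Z) (HF : forall x, int_lower (dens Phi) x (Z * F x)) :
  forall x, 0 < F x < 1.
Proof.
  pose proof (Z_pos Phi Z Hm Hc H0 HZ) as Zp.
  pose proof (F_strict Phi Z F Hm Hc H0 HZ HF) as Fs.
  assert (G0 : forall u, 0 <= F u).
  { intros u. destruct (Rle_lt_dec 0 (F u)) as [|Hl]; auto. exfalso.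
    destruct (F_left Phi Z F Hm Hc H0 HZ HF (- (Z * F u))) as [M HM]; [nra|].
    set (w := Rmin (u - 1) (- M)). pose proof (Rmin_l (u-1) (-M)); pose proof (Rmin_r (u-1) (-M)).
    specialize (HM w ltac:(unfold w; lra)). specialize (Fs w u ltac:(unfold w; lra)).
    apply Rabs_def2 in HM. nra. }
  assert (G1 : forall u, F u <= 1).
  { intros u. destruct (Rle_lt_dec (F u) 1) as [|Hl]; auto. exfalso.
    destruct (F_right Phi Z F Hm Hc H0 HZ HF (Z * F u - Z)) as [M HM]; [nra|].
    set (w := Rmax (u + 1) M). pose proof (Rmax_l (u+1) M); pose proof (Rmax_r (u+1) M).
    specialize (HM w ltac:(unfold w; lra)). specialize (Fs u w ltac:(unfold w; lra)).
    apply Rabs_def2 in HM. nra. }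
  intros x. split.
  - pose proof (Fs (x - 1) x ltac:(lra)). pose proof (G0 (x - 1)). lra.
  - pose proof (Fs x (x + 1) ltac:(lra)). pose proof (G1 (x + 1)). lra.
Qed.

Definition Base Phi Z := Mono Phi /\ conc_on Phi (fun x => 0 <= x) /\ Cont0 Phi /\ int_full (dens Phi) Z.

Definition Ahyp Phi A th Phi1 Phi2 := 0 <= A /\ 1 < th /\ (forall x, A < x -> 0 < Phi x) /\
  (forall x, A < x -> derivable_pt_lim Phi x (Phi1 x) /\ derivable_pt_lim Phi1 x (Phi2 x)) /\
  (forall x y lam, A < x -> A < y -> 0 <= lam <= 1 ->
         Rpower (Phi (lam * x + (1 - lam) * y)) th <=
         lam * Rpower (Phi x) th + (1 - lam) * Rpower (Phi y) th).

Lemma dpl_ext f g x l l' : (forall u, f u = g u) -> l = l' -> derivable_pt_lim g x l -> derivable_pt_lim f x l'.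
Proof.
  intros Hfg Hl H eps Heps. subst. destruct (H eps Heps) as [d Hd]. exists d.
  intros h H1 H2. rewrite !Hfg. auto.
Qed.

Lemma dRpow_comp f f' x k : 0 < f x -> derivable_pt_lim f x f' ->
  derivable_pt_lim (fun u => Rpower (f u) k) x (k * Rpower (f x) (k - 1) * f').
Proof.
  intros Hp Hd. apply (derivable_pt_lim_comp f (fun u => Rpower u k)); auto.
  apply derivable_pt_lim_power; auto.
Qed.

Lemma q_slope g x h : 0 < h -> (g (x + h) - g x) / h = slope g x (x + h).
Proof. intros. unfold slope. replace (x + h - x) with h by ring. auto. Qed.

Lemma Phi1_pos Phi Z A th Phi1 Phi2 : Base Phi Z -> Ahyp Phi A th Phi1 Phi2 ->
  forall x, A < x -> 0 < Phi1 x.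
Proof.
  intros [Hm [Hc [H0 HZ]]] [HA0 [Hth [HAp [HAd HAc]]]] x Hx.
  destruct (HAd x Hx) as [Hd _].
  apply Rlt_le_trans with (slope Phi x (x + 1)).
  - unfold slope. apply Rdiv_lt_0_compat; [|lra].
    pose proof (Phi_strict Phi Z Hm Hc H0 HZ x (x+1) ltac:(lra) ltac:(lra)). lra.
  - apply (rderiv_ge Phi x); [apply deriv_rderiv; auto|].
    exists 1; split; [lra|]. intros h Hh. rewrite q_slope by lra.
    apply Phi_slope_mono; auto; lra.
Qed.

Lemma Phi1_noninc Phi Z A th Phi1 Phi2 : Base Phi Z -> Ahyp Phi A th Phi1 Phi2 ->
  forall x y, A < x -> x < y -> Phi1 y <= Phi1 x.
Proof.
  intros [Hm [Hc [H0 HZ]]] [HA0 [Hth [HAp [HAd HAc]]]] x y Hx Hxy.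
  destruct (HAd x Hx) as [Hdx _]. destruct (HAd y ltac:(lra)) as [Hdy _].
  apply Rle_trans with (slope Phi x y).
  - apply (rderiv_le Phi y); [apply deriv_rderiv; auto|].
    exists 1; split; [lra|]. intros h Hh. rewrite q_slope by lra.
    apply Phi_slope_mono; auto; lra.
  - apply (rderiv_ge Phi x); [apply deriv_rderiv; auto|].
    exists (y - x); split; [lra|]. intros h Hh. rewrite q_slope by lra.
    apply Phi_slope_mono; auto; lra.
Qed.

Lemma Phi2_nonpos Phi Z A th Phi1 Phi2 : Base Phi Z -> Ahyp Phi A th Phi1 Phi2 ->
  forall x, A < x -> Phi2 x <= 0.
Proof.
  intros HB HA x Hx. pose proof HA as [HA0 [Hth [HAp [HAd HAc]]]].
  destruct (HAd x Hx) as [_ Hd].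
  apply (rderiv_le Phi1 x); [apply deriv_rderiv; auto|].
  exists 1; split; [lra|]. intros h Hh.
  pose proof (Phi1_noninc Phi Z A th Phi1 Phi2 HB HA x (x+h) Hx ltac:(lra)).
  apply Rmult_le_reg_r with h; [lra|]. unfold Rdiv. rewrite Rmult_assoc, Rinv_l; lra.
Qed.

Definition Psi1 (Phi : R -> R) th Phi1 (x : R) := th * Rpower (Phi x) (th - 1) * Phi1 x.

Lemma Psi_deriv Phi A th Phi1 Phi2 : Ahyp Phi A th Phi1 Phi2 -> forall x, A < x ->
  derivable_pt_lim (fun u => Rpower (Phi u) th) x (Psi1 Phi th Phi1 x).
Proof.
  intros [HA0 [Hth [HAp [HAd HAc]]]] x Hx. destruct (HAd x Hx) as [Hd _].
  apply dRpow_comp; auto.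
Qed.

Lemma Psi1_nondec Phi Z A th Phi1 Phi2 : Base Phi Z -> Ahyp Phi A th Phi1 Phi2 ->
  forall x y, A < x -> x < y -> Psi1 Phi th Phi1 x <= Psi1 Phi th Phi1 y.
Proof.
  intros HB HA x y Hx Hxy. pose proof HA as [HA0 [Hth [HAp [HAd HAc]]]].
  set (g := fun u => - Rpower (Phi u) th).
  assert (Hg : conc_on g (fun u => A < u)).
  { intros a b lam Ha Hb Hl. unfold g. pose proof (HAc a b lam Ha Hb Hl). lra. }
  assert (Hint : forall u v w, A < u -> A < w -> u <= v <= w -> A < v) by (intros; lra).
  assert (Dg : forall u, A < u -> derivable_pt_lim g u (- Psi1 Phi th Phi1 u)).
  { intros u Hu. apply (derivable_pt_lim_opp (fun u => Rpower (Phi u) th)).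
    apply (Psi_deriv Phi A th Phi1 Phi2 HA); auto. }
  assert (S1 : slope g x y <= - Psi1 Phi th Phi1 x).
  { apply (rderiv_ge g x); [apply deriv_rderiv; auto|].
    exists (y - x); split; [lra|]. intros h Hh. rewrite q_slope by lra.
    apply (slope_mono g _ Hg Hint); lra. }
  assert (S2 : - Psi1 Phi th Phi1 y <= slope g x y).
  { apply (rderiv_le g y); [apply deriv_rderiv; apply Dg; lra|].
    exists 1; split; [lra|]. intros h Hh. rewrite q_slope by lra.
    apply (slope_mono g _ Hg Hint); lra. }
  lra.
Qed.

Lemma key_ineq Phi Z A th Phi1 Phi2 : Base Phi Z -> Ahyp Phi A th Phi1 Phi2 ->
  forall x, A < x -> 0 <= (th - 1) * (Phi1 x * Phi1 x) + Phi x * Phi2 x.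
Proof.
  intros HB HA x Hx. pose proof HA as [HA0 [Hth [HAp [HAd HAc]]]].
  destruct (HAd x Hx) as [Hd1 Hd2].
  set (r := Rpower (Phi x) (th - 2)).
  assert (Hr : 0 < r) by (unfold r, Rpower; apply exp_pos).
  assert (E1 : Rpower (Phi x) (th - 1) = r * Phi x).
  { unfold r. replace (th - 1) with ((th - 2) + 1) by ring. rewrite Rpower_plus, Rpower_1; auto. }
  assert (D : derivable_pt_lim (Psi1 Phi th Phi1) x
     (th * ((th - 1) * Rpower (Phi x) (th - 1 - 1) * Phi1 x) * Phi1 x +
      th * Rpower (Phi x) (th - 1) * Phi2 x)).
  { unfold Psi1.
    apply (derivable_pt_lim_mult (fun u => th * Rpower (Phi u) (th - 1)) Phi1); auto.
    apply (derivable_pt_lim_scal (fun u => Rpower (Phi u) (th - 1))).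
    apply dRpow_comp; auto. }
  replace (th - 1 - 1) with (th - 2) in D by ring. fold r in D. rewrite E1 in D.
  assert (Hpos : 0 <= th * ((th - 1) * r * Phi1 x) * Phi1 x + th * (r * Phi x) * Phi2 x).
  { apply (rderiv_ge (Psi1 Phi th Phi1) x); [apply deriv_rderiv; auto|].
    exists 1; split; [lra|]. intros h Hh.
    pose proof (Psi1_nondec Phi Z A th Phi1 Phi2 HB HA x (x + h) Hx ltac:(lra)).
    apply Rmult_le_reg_r with h; [lra|]. unfold Rdiv. rewrite Rmult_assoc, Rinv_l; lra. }
  assert (E2 : th * ((th - 1) * r * Phi1 x) * Phi1 x + th * (r * Phi x) * Phi2 x
     = (th * r) * ((th - 1) * (Phi1 x * Phi1 x) + Phi x * Phi2 x)) by ring.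
  rewrite E2 in Hpos.
  assert (0 < th * r) by (apply Rmult_lt_0_compat; lra).
  destruct (Rle_lt_dec 0 ((th - 1) * (Phi1 x * Phi1 x) + Phi x * Phi2 x)); auto. nra.
Qed.

Lemma c0_bound Phi Z A th Phi1 Phi2 : Base Phi Z -> Ahyp Phi A th Phi1 Phi2 ->
  exists c0, 0 < c0 /\ forall x, A + 1 <= x -> c0 <= Rpower (Phi x) (th - 1) * Phi1 x.
Proof.
  intros HB HA. pose proof HA as [HA0 [Hth [HAp [HAd HAc]]]].
  exists (Rpower (Phi (A+1)) (th - 1) * Phi1 (A+1)). split.
  - apply Rmult_lt_0_compat; [unfold Rpower; apply exp_pos|].
    apply (Phi1_pos Phi Z A th Phi1 Phi2 HB HA); lra.
  - intros x Hx. destruct Hx as [Hx|Hx]; [|subst; lra].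
    pose proof (Psi1_nondec Phi Z A th Phi1 Phi2 HB HA (A+1) x ltac:(lra) Hx).
    unfold Psi1 in H. rewrite !Rmult_assoc in H.
    apply Rmult_le_reg_l with th; lra.
Qed.

Lemma Phi1_small Phi Z A th Phi1 Phi2 : Base Phi Z -> Ahyp Phi A th Phi1 Phi2 ->
  (forall eps, 0 < eps -> exists M, forall x, M < x -> Rabs (Phi x / x) < eps) ->
  forall eps, 0 < eps -> exists X, forall x, X < x -> Phi1 x < eps.
Proof.
  intros HB HA Hsub eps Heps. pose proof HB as [Hm [Hc [H0 HZ]]].
  pose proof HA as [HA0 [Hth [HAp [HAd HAc]]]].
  destruct (Hsub (eps/4) ltac:(lra)) as [M HM].
  exists (Rmax (Rmax M (2 * A + 1)) (4 * Rabs (Phi 0) / eps + 1)).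
  intros x Hx.
  pose proof (Rmax_l (Rmax M (2 * A + 1)) (4 * Rabs (Phi 0) / eps + 1)).
  pose proof (Rmax_r (Rmax M (2 * A + 1)) (4 * Rabs (Phi 0) / eps + 1)).
  pose proof (Rmax_l M (2*A+1)). pose proof (Rmax_r M (2*A+1)).
  assert (HQ : 0 <= 4 * Rabs (Phi 0) / eps) by (apply Rmult_le_pos; [pose proof (Rabs_pos (Phi 0)); lra|left; apply Rinv_0_lt_compat; lra]).
  assert (Hx0 : 0 < x) by lra.
  destruct (HAd x ltac:(lra)) as [Hd _].
  assert (S : Phi1 x <= slope Phi (x/2) x).
  { apply (rderiv_le Phi x); [apply deriv_rderiv; auto|].
    exists 1; split; [lra|]. intros h Hh. rewrite q_slope by lra.
    apply Phi_slope_mono; auto; lra. }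
  assert (E : slope Phi (x/2) x = 2 * (Phi x / x) - 2 * Phi (x/2) / x) by (unfold slope; field; lra).
  pose proof (Hm 0 (x/2) ltac:(lra) ltac:(lra)).
  specialize (HM x ltac:(lra)). apply Rabs_def2 in HM.
  assert (2 * Phi (x/2) / x >= 2 * Phi 0 / x).
  { unfold Rdiv. apply Rle_ge, Rmult_le_compat_r; [left; apply Rinv_0_lt_compat; lra|lra]. }
  assert (Hp0 : - (2 * Phi 0 / x) < eps / 2).
  { assert (x > 4 * Rabs (Phi 0) / eps) by lra.
    assert (4 * Rabs (Phi 0) < eps * x).
    { apply Rmult_lt_reg_r with (/ eps); [apply Rinv_0_lt_compat; lra|].
      replace (eps * x * / eps) with x by (field; lra). lra. }
    pose proof (Rle_abs (- Phi 0)) as HH. rewrite Rabs_Ropp in HH.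
    apply Rmult_lt_reg_r with x; [lra|].
    replace (- (2 * Phi 0 / x) * x) with (- 2 * Phi 0) by (field; lra). lra. }
  lra.
Qed.

Definition hh (Phi Phi1 : R -> R) (u : R) := exp (- Phi u) / Phi1 u.

Lemma h_deriv Phi Z A th Phi1 Phi2 : Base Phi Z -> Ahyp Phi A th Phi1 Phi2 ->
  forall x, A < x -> derivable_pt_lim (hh Phi Phi1) x
     (- exp (- Phi x) - Phi2 x * (exp (- Phi x) / (Phi1 x * Phi1 x))).
Proof.
  intros HB HA x Hx. pose proof HA as [HA0 [Hth [HAp [HAd HAc]]]].
  destruct (HAd x Hx) as [Hd1 Hd2].
  pose proof (Phi1_pos Phi Z A th Phi1 Phi2 HB HA x Hx) as Hp.
  assert (De : derivable_pt_lim (fun u => exp (- Phi u)) x (exp (- Phi x) * (- Phi1 x))).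
  { apply (derivable_pt_lim_comp (fun u => - Phi u) exp).
    - apply (derivable_pt_lim_opp Phi); auto.
    - apply derivable_pt_lim_exp. }
  pose proof (derivable_pt_lim_div _ _ _ _ _ De Hd2 ltac:(lra)) as Dq.
  eapply dpl_ext; [| |exact Dq].
  - intros u; unfold hh, div_fct; reflexivity.
  - unfold Rsqr. field. lra.
Qed.

Lemma h_pos Phi Z A th Phi1 Phi2 : Base Phi Z -> Ahyp Phi A th Phi1 Phi2 ->
  forall x, A < x -> 0 < hh Phi Phi1 x.
Proof.
  intros HB HA x Hx. unfold hh. apply Rdiv_lt_0_compat; [apply exp_pos|].
  apply (Phi1_pos Phi Z A th Phi1 Phi2 HB HA); auto.
Qed.

Lemma Phi_large Phi Z : Base Phi Z -> forall B, exists Y, 0 <= Y /\ forall y, Y <= y -> B < Phi y.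
Proof.
  intros [Hm [Hc [H0 HZ]]] B. destruct (Phi_unbounded Phi Z Hm Hc H0 HZ B) as [Y [HY HYB]].
  exists Y; split; auto. intros y Hy. pose proof (Hm Y y HY Hy). lra.
Qed.

Lemma h_small Phi Z A th Phi1 Phi2 : Base Phi Z -> Ahyp Phi A th Phi1 Phi2 ->
  forall eps, 0 < eps -> exists Y, forall y, Y <= y -> hh Phi Phi1 y < eps.
Proof.
  intros HB HA eps Heps. pose proof HA as [HA0 [Hth [HAp [HAd HAc]]]].
  destruct (c0_bound Phi Z A th Phi1 Phi2 HB HA) as [c0 [Hc0 Hc0b]].
  destruct (ln_small (/ (2 * th))) as [B [HB0 HBl]]; [apply Rinv_0_lt_compat; lra|].
  destruct (Phi_large Phi Z HB (Rmax B (2 * Rabs (ln (c0 * eps))))) as [Y0 [HY0 HY0b]].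
  exists (Rmax Y0 (A + 1)). intros y Hy.
  pose proof (Rmax_l Y0 (A+1)). pose proof (Rmax_r Y0 (A+1)).
  specialize (HY0b y ltac:(lra)).
  pose proof (Rmax_l B (2 * Rabs (ln (c0 * eps)))). pose proof (Rmax_r B (2 * Rabs (ln (c0 * eps)))).
  set (u := Phi y) in *.
  assert (Hu : 0 < u) by (unfold u; apply HAp; lra).
  specialize (HBl u ltac:(lra)).
  specialize (Hc0b y ltac:(lra)).
  pose proof (Phi1_pos Phi Z A th Phi1 Phi2 HB HA y ltac:(lra)) as Hp.
  unfold Rpower in Hc0b. fold u in Hc0b.
  assert (L1 : (th - 1) * ln u <= u / 2).
  { assert (W : (th - 1) * ln u <= (th - 1) * (/ (2 * th) * u)) by (apply Rmult_le_compat_l; lra).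
    assert (E1 : th * (/ (2 * th) * u) = u / 2) by (field; lra).
    assert (0 <= / (2 * th) * u) by (apply Rmult_le_pos; [left; apply Rinv_0_lt_compat|]; lra).
    nra. }
  set (R := exp ((th - 1) * ln u)) in *.
  assert (HR : 0 < R) by apply exp_pos.
  assert (Hh : hh Phi Phi1 y <= exp (- u) * R / c0).
  { unfold hh. fold u. apply div_le_div; auto.
    rewrite Rmult_assoc. apply Rmult_le_compat_l; [left; apply exp_pos|]. lra. }
  assert (E2 : exp (- u) * R = exp (- u + (th - 1) * ln u)) by (unfold R; rewrite exp_plus; auto).
  assert (Hl : exp (- u + (th - 1) * ln u) <= exp (- u / 2)) by (apply exp_le'; lra).
  assert (Hl2 : exp (- u / 2) < c0 * eps).
  { rewrite <- (exp_ln (c0 * eps)) by (apply Rmult_lt_0_compat; lra).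
    apply exp_increasing. pose proof (Rle_abs (- ln (c0 * eps))) as HH. rewrite Rabs_Ropp in HH. lra. }
  assert (exp (- u) * R / c0 < eps).
  { apply Rmult_lt_reg_r with c0; auto. unfold Rdiv. rewrite Rmult_assoc, Rinv_l by lra. lra. }
  lra.
Qed.

Lemma lim_nonneg (g : R -> R) X : (forall x y, X < x -> x <= y -> g y <= g x) ->
  (forall eps, 0 < eps -> exists M, forall y, M <= y -> - eps < g y) ->
  forall x, X < x -> 0 <= g x.
Proof.
  intros Hmon Hlim x Hx. destruct (Rle_lt_dec 0 (g x)) as [|Hn]; auto. exfalso.
  destruct (Hlim (- g x) ltac:(lra)) as [M HM].
  set (y := Rmax M x). pose proof (Rmax_l M x). pose proof (Rmax_r M x).
  specialize (HM y ltac:(unfold y; lra)). specialize (Hmon x y Hx ltac:(unfold y; lra)). lra.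
Qed.

Lemma T_lower Phi Z A th Phi1 Phi2 T X0 : Base Phi Z -> Ahyp Phi A th Phi1 Phi2 ->
  (forall x, X0 < x -> derivable_pt_lim T x (- exp (- Phi x))) ->
  (forall eps, 0 < eps -> exists M, forall x, M <= x -> Rabs (T x) < eps) ->
  forall x, Rmax (A + 1) X0 < x -> hh Phi Phi1 x <= T x.
Proof.
  intros HB HA HT HT0 x Hx. pose proof HA as [HA0 [Hth [HAp [HAd HAc]]]].
  set (X := Rmax (A + 1) X0). pose proof (Rmax_l (A+1) X0). pose proof (Rmax_r (A+1) X0).
  cut (0 <= T x - hh Phi Phi1 x); [lra|].
  apply (lim_nonneg (fun u => T u - hh Phi Phi1 u) X); auto.
  - intros a b Ha Hab.
    apply (noninc (fun u => T u - hh Phi Phi1 u) (fun c => - exp (- Phi c) - (- exp (- Phi c) - Phi2 c * (exp (- Phi c) / (Phi1 c * Phi1 c))))); auto.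
    + intros c Hc. eapply dpl_ext; [| |apply (derivable_pt_lim_minus T (hh Phi Phi1))].
      * intros u; reflexivity.
      * reflexivity.
      * apply HT; unfold X in *; lra.
      * apply (h_deriv Phi Z A th Phi1 Phi2 HB HA); unfold X in *; lra.
    + intros c Hc.
      pose proof (Phi1_pos Phi Z A th Phi1 Phi2 HB HA c ltac:(unfold X in *; lra)).
      pose proof (Phi2_nonpos Phi Z A th Phi1 Phi2 HB HA c ltac:(unfold X in *; lra)).
      assert (0 < exp (- Phi c) / (Phi1 c * Phi1 c)) by (apply Rdiv_lt_0_compat; [apply exp_pos|nra]).
      nra.
  - intros eps Heps.
    destruct (HT0 (eps/2) ltac:(lra)) as [M1 HM1].
    destruct (h_small Phi Z A th Phi1 Phi2 HB HA (eps/2) ltac:(lra)) as [M2 HM2].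
    exists (Rmax (Rmax M1 M2) X). intros y Hy.
    pose proof (Rmax_l (Rmax M1 M2) X). pose proof (Rmax_r (Rmax M1 M2) X).
    pose proof (Rmax_l M1 M2). pose proof (Rmax_r M1 M2).
    specialize (HM1 y ltac:(lra)). specialize (HM2 y ltac:(lra)).
    apply Rabs_def2 in HM1. lra.
Qed.

Lemma T_upper Phi Z A th Phi1 Phi2 T X0 : Base Phi Z -> Ahyp Phi A th Phi1 Phi2 ->
  (forall x, X0 < x -> derivable_pt_lim T x (- exp (- Phi x))) ->
  (forall eps, 0 < eps -> exists M, forall x, M <= x -> Rabs (T x) < eps) ->
  forall del, 0 < del < 1 -> exists X, forall x, X < x -> (1 - del) * T x <= hh Phi Phi1 x.
Proof.
  intros HB HA HT HT0 del Hdel. pose proof HA as [HA0 [Hth [HAp [HAd HAc]]]].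
  destruct (Phi_large Phi Z HB ((th - 1) / del)) as [Y0 [HY0 HY0b]].
  set (X := Rmax (Rmax (A + 1) X0) Y0). exists X. intros x Hx.
  pose proof (Rmax_l (Rmax (A+1) X0) Y0). pose proof (Rmax_r (Rmax (A+1) X0) Y0).
  pose proof (Rmax_l (A+1) X0). pose proof (Rmax_r (A+1) X0).
  cut (0 <= hh Phi Phi1 x - (1 - del) * T x); [lra|].
  apply (lim_nonneg (fun u => hh Phi Phi1 u - (1 - del) * T u) X); auto.
  - intros a b Ha Hab.
    apply (noninc (fun u => hh Phi Phi1 u - (1 - del) * T u) (fun c => (- exp (- Phi c) - Phi2 c * (exp (- Phi c) / (Phi1 c * Phi1 c)))
                               - (1 - del) * (- exp (- Phi c)))); auto.
    + intros c Hc. eapply dpl_ext; [| |apply (derivable_pt_lim_minus (hh Phi Phi1) (mult_real_fct (1 - del) T))].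
      * intros u; reflexivity.
      * reflexivity.
      * apply (h_deriv Phi Z A th Phi1 Phi2 HB HA); unfold X in *; lra.
      * apply derivable_pt_lim_scal. apply HT; unfold X in *; lra.
    + intros c Hc.
      assert (Hc1 : A < c) by (unfold X in *; lra).
      pose proof (Phi1_pos Phi Z A th Phi1 Phi2 HB HA c Hc1) as P1.
      pose proof (key_ineq Phi Z A th Phi1 Phi2 HB HA c Hc1) as K.
      pose proof (HAp c Hc1) as P0.
      assert (Hbig : (th - 1) / del < Phi c) by (apply HY0b; unfold X in *; lra).
      assert (Hbig2 : th - 1 <= del * Phi c).
      { apply Rmult_lt_compat_l with (r := del) in Hbig; [|lra].
        replace (del * ((th - 1) / del)) with (th - 1) in Hbig by (field; lra). lra. }
      assert (Q : 0 <= del * (Phi1 c * Phi1 c) + Phi2 c).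
      { assert (Phi c * (del * (Phi1 c * Phi1 c) + Phi2 c) >= 0).
        { assert (0 <= Phi1 c * Phi1 c) by nra. nra. }
        destruct (Rle_lt_dec 0 (del * (Phi1 c * Phi1 c) + Phi2 c)); auto. nra. }
      set (E := exp (- Phi c)). assert (0 < E) by apply exp_pos.
      assert (Eq : - E - Phi2 c * (E / (Phi1 c * Phi1 c)) - (1 - del) * - E
                   = - (E / (Phi1 c * Phi1 c)) * (del * (Phi1 c * Phi1 c) + Phi2 c))
        by (field; lra).
      rewrite Eq.
      assert (0 < E / (Phi1 c * Phi1 c)) by (apply Rdiv_lt_0_compat; nra).
      nra.
  - intros eps Heps.
    destruct (HT0 (eps/2) ltac:(lra)) as [M1 HM1].
    destruct (h_small Phi Z A th Phi1 Phi2 HB HA (eps/2) ltac:(lra)) as [M2 HM2].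
    exists (Rmax (Rmax M1 M2) X). intros y Hy.
    pose proof (Rmax_l (Rmax M1 M2) X). pose proof (Rmax_r (Rmax M1 M2) X).
    pose proof (Rmax_l M1 M2). pose proof (Rmax_r M1 M2).
    specialize (HM1 y ltac:(lra)). specialize (HM2 y ltac:(lra)).
    pose proof (h_pos Phi Z A th Phi1 Phi2 HB HA y ltac:(unfold X in *; lra)).
    apply Rabs_def2 in HM1. nra.
Qed.

Lemma ln_ge_1m x : 0 < x -> 1 - / x <= ln x.
Proof.
  intros Hx. pose proof (ln_le_sub1 (/ x) ltac:(apply Rinv_0_lt_compat; lra)).
  rewrite ln_Rinv in H by lra. lra.
Qed.

Lemma le_div_r q T Z : 0 < T -> q * T <= Z -> q <= Z / T.
Proof.
  intros HT H. apply Rmult_le_reg_r with T; auto.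
  unfold Rdiv. rewrite Rmult_assoc, Rinv_l by lra. lra.
Qed.

Lemma Core Phi Z A th Phi1 Phi2 T X0 : Base Phi Z -> Ahyp Phi A th Phi1 Phi2 ->
  (forall eps, 0 < eps -> exists M, forall x, M < x -> Rabs (Phi x / x) < eps) ->
  (forall x, X0 < x -> derivable_pt_lim T x (- exp (- Phi x))) ->
  (forall eps, 0 < eps -> exists M, forall x, M <= x -> Rabs (T x) < eps) ->
  forall eps, 0 < eps -> exists X, forall x, X < x -> 0 < T x /\
    forall y l, 0 <= y -> Phi y = ln (Z / T x) -> rderiv Phi y l ->
      Rabs (exp (- Phi x) / (T x * l) - 1) < eps.
Proof.
  intros HB HA Hsub HT HT0 eps Heps.
  pose proof HB as [Hm [Hc [H0 HZ]]].
  pose proof HA as [HA0 [Hth [HAp [HAd HAc]]]].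
  pose proof (Z_pos Phi Z Hm Hc H0 HZ) as Zp.
  set (e := Rmin eps 1). assert (He : 0 < e <= 1 /\ e <= eps) by (unfold e; pose proof (Rmin_l eps 1); pose proof (Rmin_r eps 1); pose proof (Rmin_pos eps 1 Heps ltac:(lra)); lra).
  set (del := e / 2).
  set (eta := Rmin (1/2) (e / (8 * th))).
  assert (Heta : 0 < eta <= 1/2 /\ eta <= e / (8 * th)).
  { unfold eta. pose proof (Rmin_l (1/2) (e/(8*th))). pose proof (Rmin_r (1/2) (e/(8*th))).
    assert (Q : 0 < e / (8 * th)) by (apply Rdiv_lt_0_compat; lra).
    pose proof (Rmin_pos (1/2) (e/(8*th)) ltac:(lra) Q). lra. }
  set (a := 2 * (th - 1) * eta).
  assert (Ha : 0 <= a < e / 4).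
  { unfold a. split; [nra|].
    assert (th * (e / (8 * th)) = e / 8) by (field; lra).
    assert (th * eta <= e / 8) by nra. nra. }
  destruct (c0_bound Phi Z A th Phi1 Phi2 HB HA) as [c0 [Hc0 Hc0b]].
  set (K := ln Z + ln c0 + ln (1 - del)).
  destruct (ln_small (eta / (2 * th))) as [B1 [HB1 HB1l]]; [apply Rdiv_lt_0_compat; lra|].
  destruct (T_upper Phi Z A th Phi1 Phi2 T X0 HB HA HT HT0 del ltac:(unfold del; lra)) as [X2 HX2].
  destruct (Phi1_small Phi Z A th Phi1 Phi2 HB HA Hsub (/ Z) ltac:(apply Rinv_0_lt_compat; lra)) as [X3 HX3].
  set (big := Rmax (Rmax B1 (2 * Rabs K / eta)) (2 * Phi (A + 1) + 2)).
  destruct (Phi_large Phi Z HB big) as [Y4 [HY4 HY4b]].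
  set (X1 := Rmax (A + 1) X0).
  exists (Rmax (Rmax X1 X2) (Rmax X3 Y4)). intros x Hx.
  pose proof (Rmax_l (Rmax X1 X2) (Rmax X3 Y4)). pose proof (Rmax_r (Rmax X1 X2) (Rmax X3 Y4)).
  pose proof (Rmax_l X1 X2). pose proof (Rmax_r X1 X2). pose proof (Rmax_l X3 Y4). pose proof (Rmax_r X3 Y4).
  pose proof (Rmax_l (A+1) X0). pose proof (Rmax_r (A+1) X0).
  assert (HxA : A + 1 < x) by (unfold X1 in *; lra).
  pose proof (T_lower Phi Z A th Phi1 Phi2 T X0 HB HA HT HT0 x ltac:(fold X1; lra)) as Low.
  specialize (HX2 x ltac:(lra)) as Up.
  specialize (HX3 x ltac:(lra)).
  specialize (HY4b x ltac:(lra)).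
  pose proof (h_pos Phi Z A th Phi1 Phi2 HB HA x ltac:(lra)) as hpos.
  split; [lra|].
  intros y l Hy0 HyE Hl.
  set (E := exp (- Phi x)) in *. assert (HE : 0 < E) by apply exp_pos.
  set (p := Phi1 x) in *. assert (Hp : 0 < p) by (apply (Phi1_pos Phi Z A th Phi1 Phi2 HB HA); lra).
  set (Tx := T x) in *. assert (HTx : 0 < Tx) by lra.
  assert (Ehh : hh Phi Phi1 x = E / p) by reflexivity.
  rewrite Ehh in Low, Up, hpos.
  assert (EE : E * exp (Phi x) = 1).
  { unfold E. rewrite <- exp_plus. replace (- Phi x + Phi x) with 0 by ring. apply exp_0. }
  assert (Hpx : 0 < Phi x) by (apply HAp; lra).
  assert (Ey : exp (Phi y) = Z / Tx).
  { rewrite HyE. apply exp_ln. apply Rdiv_lt_0_compat; lra. }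
  assert (HZp : Z * p < 1).
  { apply Rmult_lt_reg_r with (/ Z); [apply Rinv_0_lt_compat; lra|].
    replace (Z * p * / Z) with p by (field; lra). lra. }
  assert (Hyx : Phi y < Phi x).
  { apply exp_lt_inv. rewrite Ey.
    assert (Z / Tx <= Z * p * exp (Phi x)).
    { assert (Tx * p >= E) by (apply Rle_ge; apply Rmult_le_reg_r with (/ p);
        [apply Rinv_0_lt_compat; lra|]; replace (Tx * p * / p) with Tx by (field; lra); lra).
      apply Rmult_le_reg_r with Tx; auto. unfold Rdiv. rewrite Rmult_assoc, Rinv_l by lra.
      assert (Z * p * exp (Phi x) * Tx = Z * exp (Phi x) * (Tx * p)) by ring.
      assert (0 < exp (Phi x)) by apply exp_pos.
      assert (Z * exp (Phi x) * (Tx * p) >= Z * exp (Phi x) * E) by (apply Rmult_ge_compat_l; nra).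
      nra. }
    assert (0 < exp (Phi x)) by apply exp_pos. nra. }
  assert (Hyltx : y < x).
  { destruct (Rlt_le_dec y x); auto. pose proof (Hm x y ltac:(lra) r). lra. }
  assert (Hlow2 : Z * (1 - del) * p * exp (Phi x) <= Z / Tx).
  { apply le_div_r; auto.
    assert ((1 - del) * Tx * p <= E).
    { apply Rmult_le_reg_r with (/ p); [apply Rinv_0_lt_compat; lra|].
      replace ((1 - del) * Tx * p * / p) with ((1 - del) * Tx) by (field; lra). auto. }
    assert (0 < exp (Phi x)) by apply exp_pos.
    assert (Z * (1 - del) * p * exp (Phi x) * Tx = Z * exp (Phi x) * ((1 - del) * Tx * p)) by ring.
    assert (Z * exp (Phi x) * ((1 - del) * Tx * p) <= Z * exp (Phi x) * E)
      by (apply Rmult_le_compat_l; [nra|lra]).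
    nra. }
  assert (Hdel : 0 < 1 - del) by (unfold del; lra).
  assert (Hlnb : ln Z + ln (1 - del) + ln p + Phi x <= Phi y).
  { rewrite HyE. rewrite <- (ln_exp (Phi x)) at 1.
    rewrite <- ln_mult, <- ln_mult, <- ln_mult; try apply exp_pos; try lra;
      try (apply Rmult_lt_0_compat; lra); try (repeat apply Rmult_lt_0_compat; lra).
    apply ln_le'; [|auto]. repeat apply Rmult_lt_0_compat; try lra. apply exp_pos. }
  assert (HlnR : ln c0 <= (th - 1) * ln (Phi x) + ln p).
  { specialize (Hc0b x ltac:(lra)). fold p in Hc0b.
    assert (0 < Rpower (Phi x) (th - 1)) by (unfold Rpower; apply exp_pos).
    rewrite <- ln_Rpower, <- ln_mult by auto. apply ln_le'; auto. }
  pose proof (Rmax_l (Rmax B1 (2 * Rabs K / eta)) (2 * Phi (A + 1) + 2)).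
  pose proof (Rmax_r (Rmax B1 (2 * Rabs K / eta)) (2 * Phi (A + 1) + 2)).
  pose proof (Rmax_l B1 (2 * Rabs K / eta)). pose proof (Rmax_r B1 (2 * Rabs K / eta)).
  unfold big in HY4b.
  assert (LnS : (th - 1) * ln (Phi x) <= eta * Phi x / 2).
  { specialize (HB1l (Phi x) ltac:(lra)).
    assert (W : (th - 1) * ln (Phi x) <= (th - 1) * (eta / (2 * th) * Phi x)) by (apply Rmult_le_compat_l; lra).
    assert (E1 : th * (eta / (2 * th) * Phi x) = eta * Phi x / 2) by (field; lra).
    assert (0 <= eta / (2 * th) * Phi x) by (apply Rmult_le_pos; [left; apply Rdiv_lt_0_compat|]; lra).
    nra. }
  assert (KS : Rabs K <= eta * Phi x / 2).
  { assert (QK : 2 * Rabs K / eta < Phi x) by lra.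
    apply Rmult_lt_compat_l with (r := eta) in QK; [|lra].
    replace (eta * (2 * Rabs K / eta)) with (2 * Rabs K) in QK by (field; lra). lra. }
  assert (Hyb : (1 - eta) * Phi x <= Phi y).
  { pose proof (Rle_abs (- K)) as HH. rewrite Rabs_Ropp in HH. unfold K in *. nra. }
  assert (HyA : A + 1 < y).
  { destruct (Rlt_le_dec (A + 1) y); auto.
    pose proof (Hm y (A + 1) Hy0 r). nra. }
  destruct (HAd y ltac:(lra)) as [Hdy _].
  assert (El : l = Phi1 y) by (apply (rderiv_unique Phi y); auto; apply deriv_rderiv; auto).
  subst l.
  assert (Hl0 : 0 < Phi1 y) by (apply (Phi1_pos Phi Z A th Phi1 Phi2 HB HA); lra).
  assert (Hpl : p <= Phi1 y) by (apply (Phi1_noninc Phi Z A th Phi1 Phi2 HB HA); lra).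
  assert (Hf : Phi1 y * (1 - a) <= p).
  { pose proof (Psi1_nondec Phi Z A th Phi1 Phi2 HB HA y x ltac:(lra) Hyltx) as PS.
    unfold Psi1 in PS. fold p in PS.
    assert (PS2 : Rpower (Phi y) (th - 1) * Phi1 y <= Rpower (Phi x) (th - 1) * p).
    { apply Rmult_le_reg_l with th; lra. }
    unfold Rpower in PS2.
    set (z := (th - 1) * (ln (Phi y) - ln (Phi x))).
    assert (Ez : exp ((th - 1) * ln (Phi y)) = exp z * exp ((th - 1) * ln (Phi x)))
      by (unfold z; rewrite <- exp_plus; f_equal; ring).
    rewrite Ez in PS2.
    assert (0 < exp ((th - 1) * ln (Phi x))) by apply exp_pos.
    assert (PS3 : exp z * Phi1 y <= p) by nra.
    assert (Hpy : 0 < Phi y) by nra.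
    assert (L1 : ln ((1 - eta) * Phi x) <= ln (Phi y)) by (apply ln_le'; nra).
    rewrite ln_mult in L1 by lra.
    pose proof (ln_ge_1m (1 - eta) ltac:(lra)) as L2.
    assert (L3 : - (2 * eta) <= 1 - / (1 - eta)).
    { assert (/ (1 - eta) <= 1 + 2 * eta).
      { apply Rmult_le_reg_r with (1 - eta); [lra|]. rewrite Rinv_l by lra. nra. }
      lra. }
    assert (Hz : - a <= z) by (unfold z, a; nra).
    pose proof (exp_ineq1_le z). nra. }
  assert (HTl : 0 < Tx * Phi1 y) by nra.
  assert (R1 : E / (Tx * Phi1 y) <= 1).
  { apply Rmult_le_reg_r with (Tx * Phi1 y); auto. unfold Rdiv. rewrite Rmult_assoc, Rinv_l by lra.
    assert (E = E / p * p) by (field; lra).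
    assert (E / p * p <= Tx * p) by (apply Rmult_le_compat_r; lra).
    nra. }
  assert (R2 : 1 - e < E / (Tx * Phi1 y)).
  { apply Rmult_lt_reg_r with (Tx * Phi1 y); auto. unfold Rdiv. rewrite Rmult_assoc, Rinv_l by lra.
    assert (U1 : (1 - del) * Tx * p <= E).
    { apply Rmult_le_reg_r with (/ p); [apply Rinv_0_lt_compat; lra|].
      replace ((1 - del) * Tx * p * / p) with ((1 - del) * Tx) by (field; lra). auto. }
    assert (U2 : (1 - del) * Tx * (Phi1 y * (1 - a)) <= (1 - del) * Tx * p)
      by (apply Rmult_le_compat_l; nra).
    assert (U3 : 1 - e < (1 - del) * (1 - a)) by (unfold del; nra).
    nra. }
  apply Rabs_def1; lra.
Qed.

Lemma l_pos Phi Z : Base Phi Z -> forall y l, 0 <= y -> rderiv Phi y l -> 0 < l.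
Proof.
  intros [Hm [Hc [H0 HZ]]] y l Hy Hl.
  apply Rlt_le_trans with (slope Phi y (y + 1)).
  - unfold slope. apply Rdiv_lt_0_compat; [|lra].
    pose proof (Phi_strict Phi Z Hm Hc H0 HZ y (y+1) Hy ltac:(lra)). lra.
  - apply (rderiv_ge Phi y); auto.
    exists 1; split; [lra|]. intros h Hh. rewrite q_slope by lra.
    apply Phi_slope_mono; auto; lra.
Qed.

Lemma T1_deriv Phi Z F : Base Phi Z -> 0 < Z -> (forall x, derivable_pt_lim F x (dens Phi x / Z)) ->
  forall x, 0 < x -> derivable_pt_lim (fun u => Z * F (- u)) x (- exp (- Phi x)).
Proof.
  intros HB Zp HFd x Hx.
  assert (D : derivable_pt_lim (fun u => F (- u)) x (dens Phi (- x) / Z * (-1))).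
  { apply (derivable_pt_lim_comp (fun u => - u) F).
    - eapply dpl_ext; [| |apply (derivable_pt_lim_opp id)].
      + intros; reflexivity.
      + reflexivity.
      + apply derivable_pt_lim_id.
    - apply HFd. }
  eapply dpl_ext; [| |apply (derivable_pt_lim_scal _ Z _ _ D)].
  - intros; reflexivity.
  - unfold dens. rewrite Rabs_Ropp, Rabs_right by lra. field. lra.
Qed.

Lemma T2_deriv Phi Z F : Base Phi Z -> 0 < Z -> (forall x, derivable_pt_lim F x (dens Phi x / Z)) ->
  forall x, 0 < x -> derivable_pt_lim (fun u => Z - Z * F u) x (- exp (- Phi x)).
Proof.
  intros HB Zp HFd x Hx.
  assert (D := derivable_pt_lim_minus (fct_cte Z) (mult_real_fct Z F) x _ _
      (derivable_pt_lim_const Z x) (derivable_pt_lim_scal F Z x _ (HFd x))).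
  eapply dpl_ext; [| |exact D].
  - intros; reflexivity.
  - unfold dens. rewrite Rabs_right by lra. field. lra.
Qed.

Lemma F_mono Phi Z F : Base Phi Z -> (forall x, int_lower (dens Phi) x (Z * F x)) ->
  forall x y, x <= y -> F x <= F y.
Proof.
  intros [Hm [Hc [H0 HZ]]] HF x y [H|H]; [left; apply (F_strict Phi Z F Hm Hc H0 HZ HF); auto|subst; lra].
Qed.
Theorem mainTheorem16 (Phi : R -> R)
  (* non-decreasing on R+ *)
  (Hmono : forall x y, 0 <= x -> x <= y -> Phi x <= Phi y)
  (* concave on R+ *)
  (Hconc : forall x y lam, 0 <= x -> 0 <= y -> 0 <= lam <= 1 ->
      lam * Phi x + (1 - lam) * Phi y <= Phi (lam * x + (1 - lam) * y))
  (* continuity at 0 (see NOTES.md, FIDELITY) *)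
  (Hcont0 : forall eps, 0 < eps -> exists d, 0 < d /\
      forall x, 0 <= x < d -> Rabs (Phi x - Phi 0) < eps)
  (* Phi(x)/x -> 0 at +oo *)
  (Hsub : forall eps, 0 < eps -> exists M, forall x, M < x -> Rabs (Phi x / x) < eps)
  (* C^2 near +oo and Phi^theta convex near +oo, for some theta > 1 *)
  (Hinf : exists A theta Phi1 Phi2, 1 < theta /\
      (forall x, A < x -> 0 < Phi x) /\
      (forall x, A < x -> derivable_pt_lim Phi x (Phi1 x) /\
                          derivable_pt_lim Phi1 x (Phi2 x) /\ continuity_pt Phi2 x) /\
      (forall x y lam, A < x -> A < y -> 0 <= lam <= 1 ->
         Rpower (Phi (lam * x + (1 - lam) * y)) theta <=
         lam * Rpower (Phi x) theta + (1 - lam) * Rpower (Phi y) theta))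
  (* Z_Phi = int_R exp(-Phi(|x|)) dx, finite *)
  (Z : R) (HZ : int_full (dens Phi) Z)
  (* F = F_{mu_Phi} *)
  (F : R -> R) (HF : forall x, int_lower (dens Phi) x (Z * F x))
  (* G = F^{-1} on (0,1) *)
  (G : R -> R) (HG : forall t, 0 < t < 1 -> F (G t) = t)
  (* J = J_{mu_Phi} = F' o F^{-1} on (0,1), extended by 0 at 0 and 1 *)
  (J : R -> R) (HJ0 : J 0 = 0) (HJ1 : J 1 = 0)
  (HJ : forall t, 0 < t < 1 -> derivable_pt_lim F (G t) (J t)) :
  ( (exists d, 0 < d /\ forall t, 0 < t < d -> exists l, dPhi_inv Phi (ln (/ t)) l) /\
    (forall eps, 0 < eps -> exists d, 0 < d /\
       forall t l, 0 < t < d -> dPhi_inv Phi (ln (/ t)) l ->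
         Rabs (J t / (t * l) - 1) < eps) ) /\
  ( Phi 0 < ln 2 ->
    (forall t, 0 <= t <= 1 -> exists L, LPhi Phi t L) /\
    exists k1 k2, 0 < k1 /\ 0 < k2 /\
      forall t L, 0 <= t <= 1 -> LPhi Phi t L -> k1 * L <= J t <= k2 * L ).
Proof.
  assert (HB : Base Phi Z) by (repeat split; auto).
  destruct Hinf as [A0 [th [Phi1 [Phi2 [Hth [HAp [HAd HAc]]]]]]].
  pose proof (Rmax_l A0 0) as HA1. pose proof (Rmax_r A0 0) as HA2.
  set (A := Rmax A0 0) in *.
  assert (HA : Ahyp Phi A th Phi1 Phi2).
  { unfold Ahyp. split; [lra|]. split; [lra|]. split; [intros; apply HAp; lra|].
    split; [intros x Hx; destruct (HAd x ltac:(lra)) as [? [? ?]]; split; auto|].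
    intros; apply HAc; lra. }
  pose proof (Z_pos Phi Z Hmono Hconc Hcont0 HZ) as Zp.
  pose proof (F_deriv Phi Z F Hmono Hconc Hcont0 HZ HF) as HFd.
  pose proof (F_bounds Phi Z F Hmono Hconc Hcont0 HZ HF) as Fb.
  pose proof (F_mono Phi Z F HB HF) as Fm.
  assert (HJd : forall t, 0 < t < 1 -> J t = dens Phi (G t) / Z).
  { intros t Ht. apply (uniqueness_limite F (G t)); auto. }
  set (T1 := fun u => Z * F (- u)).
  set (T2 := fun u => Z - Z * F u).
  assert (T1d : forall x, 0 < x -> derivable_pt_lim T1 x (- exp (- Phi x)))
    by (apply T1_deriv; auto).
  assert (T2d : forall x, 0 < x -> derivable_pt_lim T2 x (- exp (- Phi x)))
    by (apply T2_deriv; auto).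
  assert (T1l : forall eps, 0 < eps -> exists M, forall x, M <= x -> Rabs (T1 x) < eps).
  { intros eps Heps. destruct (F_left Phi Z F Hmono Hconc Hcont0 HZ HF eps Heps) as [M HM].
    exists M. intros x Hx. apply HM. lra. }
  assert (T2l : forall eps, 0 < eps -> exists M, forall x, M <= x -> Rabs (T2 x) < eps).
  { intros eps Heps. destruct (F_right Phi Z F Hmono Hconc Hcont0 HZ HF eps Heps) as [M HM].
    exists M. intros x Hx. apply HM. lra. }
  pose proof (Core Phi Z A th Phi1 Phi2 T1 0 HB HA Hsub T1d T1l) as C1.
  pose proof (Core Phi Z A th Phi1 Phi2 T2 0 HB HA Hsub T2d T2l) as C2.
  split.
  { split.
    - exists (Rmin (exp (- Phi 1)) (1/2)). split; [apply Rmin_pos; [apply exp_pos|lra]|].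
      intros t Ht. pose proof (Rmin_l (exp (- Phi 1)) (1/2)) as R1.
      assert (Hv : Phi 1 <= ln (/ t)).
      { rewrite ln_Rinv by lra.
        assert (ln t < - Phi 1).
        { rewrite <- (ln_exp (- Phi 1)). apply ln_increasing; lra. }
        lra. }
      destruct (Phi_preimage Phi Z Hmono Hconc Hcont0 HZ 1 (ln (/ t)) ltac:(lra) Hv)
        as [y [l [Hy1 [Hy Hl]]]].
      exists l, y. split; [lra|split; auto].
    - intros eps Heps. destruct (C1 eps Heps) as [X HX].
      pose proof (Rmax_l X 0) as R1. pose proof (Rmax_r X 0) as R2.
      set (Xp := Rmax X 0 + 1) in *.
      exists (Rmin (F (- Xp)) (1/2)). split; [apply Rmin_pos; [apply Fb|lra]|].
      intros t l Ht [y [Hy0 [HyE Hl]]].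
      pose proof (Rmin_l (F (- Xp)) (1/2)) as R3. pose proof (Rmin_r (F (- Xp)) (1/2)) as R4.
      assert (Ht1 : 0 < t < 1) by lra.
      set (x0 := G t). assert (Fx0 : F x0 = t) by (apply HG; auto).
      assert (Hx0 : x0 < - Xp).
      { destruct (Rlt_le_dec x0 (-Xp)) as [r|r]; auto. pose proof (Fm (-Xp) x0 r). lra. }
      destruct (HX (- x0) ltac:(unfold Xp in *; lra)) as [HTp HR].
      assert (ET : T1 (- x0) = Z * t) by (unfold T1; rewrite Ropp_involutive, Fx0; auto).
      rewrite ET in HTp, HR.
      assert (Hl0 : 0 < l) by (apply (l_pos Phi Z HB y); auto).
      assert (HyE' : Phi y = ln (Z / (Z * t))).
      { rewrite HyE. f_equal. field. lra. }
      specialize (HR y l Hy0 HyE' Hl).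
      rewrite (HJd t Ht1). fold x0. unfold dens.
      rewrite (Rabs_left x0) by (unfold Xp in *; lra).
      replace (exp (- Phi (- x0)) / Z / (t * l)) with (exp (- Phi (- x0)) / (Z * t * l)) by (field; lra).
      auto. }
  intros Hln2.
  destruct (Hcont0 (ln 2 - Phi 0) ltac:(lra)) as [d0 [Hd0 Hd0b]].
  set (c := d0 / 2).
  assert (Hcp : 0 < c) by (unfold c; lra).
  assert (Hc : Phi c < ln 2).
  { specialize (Hd0b c ltac:(unfold c; lra)). apply Rabs_def2 in Hd0b. lra. }
  assert (Hmin : forall t, 0 < t < 1 -> 0 < Rmin t (1 - t) <= 1/2 /\ ln 2 <= ln (/ Rmin t (1 - t))).
  { intros t Ht. pose proof (Rmin_l t (1 - t)). pose proof (Rmin_r t (1 - t)).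
    assert (Hm0 : 0 < Rmin t (1 - t)) by (apply Rmin_pos; lra).
    assert (Hm1 : Rmin t (1 - t) <= 1/2) by (destruct (Rle_dec t (1/2)); lra).
    split; [lra|]. apply ln_le'; [lra|].
    replace 2 with (/ (1/2)) by field. apply Rinv_le_contravar; lra. }
  split.
  { intros t Ht.
    destruct (Req_dec t 0) as [E0|E0]; [exists 0; left; split; auto|].
    destruct (Req_dec t 1) as [E1|E1]; [exists 0; left; split; auto|].
    assert (Ht1 : 0 < t < 1) by lra.
    destruct (Hmin t Ht1) as [Hm0 Hml].
    destruct (Phi_preimage Phi Z Hmono Hconc Hcont0 HZ c (ln (/ Rmin t (1 - t))) Hcp ltac:(lra))
      as [y [l [Hy1 [Hy Hl]]]].
    exists (Rmin t (1 - t) * l). right. split; auto.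
    exists l. split; auto. exists y. split; [lra|split; auto]. }
  destruct (C1 (1/2) ltac:(lra)) as [X1 HX1].
  destruct (C2 (1/2) ltac:(lra)) as [X2 HX2].
  destruct (F_left Phi Z F Hmono Hconc Hcont0 HZ HF (Z/2) ltac:(lra)) as [M1 HM1].
  destruct (F_right Phi Z F Hmono Hconc Hcont0 HZ HF (Z/2) ltac:(lra)) as [M2 HM2].
  pose proof (Rmax_l (Rmax X1 X2) (Rmax (Rmax M1 M2) 0)) as Q1.
  pose proof (Rmax_r (Rmax X1 X2) (Rmax (Rmax M1 M2) 0)) as Q2.
  pose proof (Rmax_l X1 X2) as Q3. pose proof (Rmax_r X1 X2) as Q4.
  pose proof (Rmax_l (Rmax M1 M2) 0) as Q5. pose proof (Rmax_r (Rmax M1 M2) 0) as Q6.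
  pose proof (Rmax_l M1 M2) as Q7. pose proof (Rmax_r M1 M2) as Q8.
  set (Xq := Rmax (Rmax X1 X2) (Rmax (Rmax M1 M2) 0) + 1) in *.
  assert (HXq : X1 < Xq /\ X2 < Xq /\ M1 < Xq /\ M2 < Xq /\ 0 < Xq) by (unfold Xq; lra).
  clearbody Xq.
  pose proof (Fb (- Xq)) as Fb1. pose proof (Fb Xq) as Fb2.
  set (del := Rmin (F (- Xq)) (1 - F Xq)).
  assert (Hdel : 0 < del /\ del <= F (- Xq) /\ del <= 1 - F Xq).
  { unfold del. pose proof (Rmin_l (F (- Xq)) (1 - F Xq)). pose proof (Rmin_r (F (- Xq)) (1 - F Xq)).
    pose proof (Rmin_pos (F (- Xq)) (1 - F Xq) ltac:(lra) ltac:(lra)). lra. }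
  clearbody del.
  destruct (Phi_large Phi Z HB (ln (/ del))) as [Y [HY0 HYb]].
  set (lmin := slope Phi Y (Y + 1)).
  assert (Hlmin : 0 < lmin).
  { unfold lmin, slope. apply Rdiv_lt_0_compat; [|lra].
    pose proof (Phi_strict Phi Z Hmono Hconc Hcont0 HZ Y (Y + 1) HY0 ltac:(lra)). lra. }
  set (lmax := slope Phi (c / 2) c).
  assert (Hlmax : 0 <= lmax) by (apply slope_nonneg; auto; lra).
  set (k1m := exp (- Phi Xq) / Z / (lmax + 1)).
  set (k2m := exp (- Phi 0) / Z / (del * lmin)).
  assert (Hk1m : 0 < k1m) by (unfold k1m; apply Rdiv_lt_0_compat; [apply Rdiv_lt_0_compat; [apply exp_pos|lra]|lra]).
  assert (Hk2m : 0 < k2m) by (unfold k2m; apply Rdiv_lt_0_compat; [apply Rdiv_lt_0_compat; [apply exp_pos|lra]|nra]).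
  exists (Rmin (1/2) k1m), (Rmax (3/2) k2m).
  pose proof (Rmin_l (1/2) k1m) as K1. pose proof (Rmin_r (1/2) k1m) as K2.
  pose proof (Rmax_l (3/2) k2m) as K3. pose proof (Rmax_r (3/2) k2m) as K4.
  split; [apply Rmin_pos; lra|]. split; [lra|].
  intros t L Ht HL.
  destruct HL as [[Ht01 HL0] | [Ht01 [l [[y [Hy0 [HyE Hl]]] HL]]]].
  { subst L. destruct Ht01 as [-> | ->]; [rewrite HJ0|rewrite HJ1]; lra. }
  destruct (Hmin t Ht01) as [Hm0 Hml].
  set (m := Rmin t (1 - t)) in *.
  assert (Hl0 : 0 < l) by (apply (l_pos Phi Z HB y); auto).
  set (x0 := G t). assert (Fx0 : F x0 = t) by (apply HG; auto).
  pose proof (HJd t Ht01) as EJ. fold x0 in EJ.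
  assert (HL0 : 0 < L) by (rewrite HL; nra).
  destruct (Rlt_le_dec x0 (- Xq)) as [Hl1|Hl1].
  {
    specialize (HM1 x0 ltac:(lra)). rewrite Fx0 in HM1. apply Rabs_def2 in HM1.
    assert (Htm : m = t) by (unfold m, Rmin; destruct (Rle_dec t (1 - t)); nra).
    destruct (HX1 (- x0) ltac:(lra)) as [HTp HR].
    assert (ET : T1 (- x0) = Z * t) by (unfold T1; rewrite Ropp_involutive, Fx0; auto).
    rewrite ET in HTp, HR.
    assert (HyE' : Phi y = ln (Z / (Z * t))).
    { rewrite HyE, Htm. f_equal. field. lra. }
    specialize (HR y l Hy0 HyE' Hl). apply Rabs_def2 in HR.
    set (R := exp (- Phi (- x0)) / (Z * t * l)) in *.
    assert (EJ2 : J t = R * (t * l)).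
    { rewrite EJ. unfold R, dens. rewrite (Rabs_left x0) by lra. field. lra. }
    rewrite HL, Htm. rewrite EJ2. split; nra. }
  destruct (Rlt_le_dec Xq x0) as [Hr1|Hr1].
  {
    specialize (HM2 x0 ltac:(lra)). rewrite Fx0 in HM2. apply Rabs_def2 in HM2.
    assert (Htm : m = 1 - t) by (unfold m, Rmin; destruct (Rle_dec t (1 - t)); nra).
    destruct (HX2 x0 ltac:(lra)) as [HTp HR].
    assert (ET : T2 x0 = Z * (1 - t)) by (unfold T2; rewrite Fx0; ring).
    rewrite ET in HTp, HR.
    assert (HyE' : Phi y = ln (Z / (Z * (1 - t)))).
    { rewrite HyE, Htm. f_equal. field. lra. }
    specialize (HR y l Hy0 HyE' Hl). apply Rabs_def2 in HR.
    set (R := exp (- Phi x0) / (Z * (1 - t) * l)) in *.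
    assert (EJ2 : J t = R * ((1 - t) * l)).
    { rewrite EJ. unfold R, dens. rewrite (Rabs_right x0) by lra. field. lra. }
    rewrite HL, Htm. rewrite EJ2. split; nra. }
  assert (Ht2 : del <= m).
  { pose proof (Fm (- Xq) x0 Hl1). pose proof (Fm x0 Xq Hr1).
    unfold m, Rmin; destruct (Rle_dec t (1 - t)); lra. }
  assert (HJlo : exp (- Phi Xq) / Z <= J t).
  { rewrite EJ. unfold dens. unfold Rdiv. apply Rmult_le_compat_r; [left; apply Rinv_0_lt_compat; lra|].
    apply exp_le'. apply Ropp_le_contravar. apply Hmono; [apply Rabs_pos|]. apply Rabs_le; lra. }
  assert (HJhi : J t <= exp (- Phi 0) / Z).
  { rewrite EJ. unfold dens. unfold Rdiv. apply Rmult_le_compat_r; [left; apply Rinv_0_lt_compat; lra|].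
    apply exp_le'. apply Ropp_le_contravar. apply Hmono; [lra|apply Rabs_pos]. }
  assert (Hyc : c < y).
  { destruct (Rlt_le_dec c y) as [r|r]; auto. pose proof (Hmono y c Hy0 r). lra. }
  assert (HlM : l <= lmax).
  { apply (rderiv_le Phi y); auto. exists 1; split; [lra|]. intros h Hh. rewrite q_slope by lra.
    unfold lmax. apply Phi_slope_mono; auto; lra. }
  assert (HyY : y < Y).
  { destruct (Rlt_le_dec y Y) as [r|r]; auto. specialize (HYb y r).
    assert (ln (/ m) <= ln (/ del)).
    { apply ln_le'; [apply Rinv_0_lt_compat; lra|]. apply Rinv_le_contravar; lra. }
    lra. }
  assert (Hlm : lmin <= l).
  { apply (rderiv_ge Phi y); auto. exists (Y + 1 - y); split; [lra|]. intros h Hh. rewrite q_slope by lra.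
    unfold lmin. apply Phi_slope_mono; auto; lra. }
  rewrite HL. split.
  - assert (Rmin (1/2) k1m * (m * l) <= k1m * (m * l)) by (apply Rmult_le_compat_r; nra).
    assert (k1m * (m * l) <= k1m * (lmax + 1)) by (apply Rmult_le_compat_l; nra).
    assert (k1m * (lmax + 1) = exp (- Phi Xq) / Z) by (unfold k1m; field; lra).
    lra.
  - assert (k2m * (m * l) <= Rmax (3/2) k2m * (m * l)) by (apply Rmult_le_compat_r; nra).
    assert (k2m * (del * lmin) <= k2m * (m * l)) by (apply Rmult_le_compat_l; nra).
    assert (k2m * (del * lmin) = exp (- Phi 0) / Z) by (unfold k2m; field; nra).
    lra.
Qed.
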